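(* Let $k\ge2$ and $\ell\ge1$. Then $D_k(\ell)\ge (k+1)k^{\ell/2-1}-1$ if $\ell$ is even, and $D_k(\ell)\ge 2k^{(\ell-1)/2}-1$ if $\ell$ is odd.
   Context: Labeled chip-firing on the infinite rooted directed $k$-ary tree (each vertex has $k$ children ordered left to right, root on layer $1$): a vertex with at least $k$ chips may fire by choosing any $k$ of its chips and sending the $i$-th smallest label among them to its $i$-th leftmost child; a configuration is stable when no vertex has $\ge k$ chips. Starting with $k^\ell$ chips labeled $1,\dots,k^\ell$ at the root, every stable configuration has exactly one chip on each vertex of layer $\ell+1$ and none elsewhere, and is identified with the permutation of labels read left to right on layer $\ell+1$. $D_k(\ell)$ denotes the maximum, over all reachable stable configurations, of the length of the longest strictly decreasing subsequence of the corresponding permutation. *)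

(* Defs.v *)
From Stdlib Require Import Relations.
From mathcomp Require Import all_boot.
Set Implicit Arguments. Unset Strict Implicit. Unset Printing Implicit Defensive.

(* Vertices of the infinite rooted k-ary tree: the root is [::]; the vertex
   [:: i1; ...; in] (each i_j < k) is reached from the root by taking child
   i1, then i2, ... (children indexed 0..k-1 from left to right).  The vertex
   v lies on layer (size v).+1; its i-th leftmost child is rcons v i. *)
Definition vertex := seq nat.

Definition config := vertex -> seq nat.

Definition init_config (k l : nat) : config :=
  fun v => if v == [::] then iota 1 (k ^ l) else [::].

Definition fire_step (k : nat) (C C' : config) : Prop :=
  exists (v : vertex) (S R : seq nat),
    [/\ size S = k, perm_eq (C v) (S ++ R),
        C' v = R,
        (forall i, i < k -> C' (rcons v i) = nth 0 (sort leq S) i :: C (rcons v i))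
      & (forall w, w != v -> (forall i, i < k -> w != rcons v i) -> C' w = C w)].

Definition reachable (k l : nat) (C : config) : Prop :=
  clos_refl_trans config (fire_step k) (init_config k l) C.

Definition stable (k : nat) (C : config) : Prop := forall v, size (C v) < k.

Fixpoint layer_words (k n : nat) : seq vertex :=
  if n is n'.+1 then [seq i :: w | i <- iota 0 k, w <- layer_words k n'] else [:: [::]].

(* The permutation associated with a stable configuration: labels read left
   to right on layer l+1 (each such vertex carries exactly one chip). *)
Definition config_perm (k l : nat) (C : config) : seq nat :=
  [seq head 0 (C v) | v <- layer_words k l].

Definition lds (p : seq nat) : nat :=
  \max_(m : (size p).-tuple bool | sorted gtn (mask m p)) size (mask m p).

(* Main.v *)
Require Import Defs.
From Stdlib Require Import Relations Lia.
From mathcomp Require Import all_boot zify.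
Set Implicit Arguments. Unset Strict Implicit. Unset Printing Implicit Defensive.



Fixpoint lexlt (u v : seq nat) : bool :=
  match u, v with
  | x :: u', y :: v' => (x < y) || ((x == y) && lexlt u' v')
  | [::], _ :: _ => true
  | _, _ => false
  end.

Lemma lexlt_irr : irreflexive lexlt.
Proof. by elim=> //= x u IH; rewrite ltnn eqxx IH. Qed.

Lemma lexlt_trans : transitive lexlt.
Proof.
move=> v u w; elim: u v w => [|x u IH] [|y v] [|z w] //=.
case/orP=> [lxy|/andP[/eqP <- Huv]]; case/orP=> [lyz|/andP[/eqP <- Hvw]].
- by rewrite (ltn_trans lxy lyz).
- by rewrite lxy.
- by rewrite lyz.
- by rewrite eqxx (IH _ _ Huv Hvw) orbT.
Qed.

Lemma lexlt_cat u v x y : size u = size v -> lexlt u v -> lexlt (u ++ x) (v ++ y).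
Proof.
elim: u v => [|a u IH] [|b v] //= [Hs] /orP[->//|/andP[-> H]].
by rewrite IH ?orbT.
Qed.

Lemma lexlt_nseq F : has (fun d => d != 0) F -> lexlt (nseq (size F) 0) F.
Proof.
by elim: F => [|[|a] F IH] //=.
Qed.

Section K.
Variable k : nat.
Hypothesis hk : 2 <= k.

Definition rv (w : seq nat) := foldr (fun d acc => d + k * acc) 0 w.

Lemma rv_rcons u b : rv (rcons u b) = rv u + k ^ (size u) * b.
Proof.
elim: u => [|x u IH] /=; first by rewrite muln0 addn0 expn0 mul1n.
rewrite IH expnS; lia.
Qed.

Lemma rv_nseq n : rv (nseq n 0) = 0.
Proof. by elim: n => //= n ->; rewrite muln0. Qed.

Lemma rv_lt u : all (fun d => d < k) u -> rv u < k ^ size u.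
Proof.
elim: u => [|x u IH] //= /andP[hx /IH h]; rewrite expnS.
have := leq_mul (leqnn k) h; lia.
Qed.

Lemma rv_pos u : has (fun d => d != 0) u -> 0 < rv u.
Proof.
elim: u => [|x u IH] //= /orP[hx|/IH h]; [lia|nia].
Qed.

Lemma mem_layer n w : (w \in layer_words k n) = (size w == n) && all (fun d => d < k) w.
Proof.
elim: n w => [|n IH] w /=; first by rewrite inE; case: w.
apply/allpairsP/idP.
  case=> [[i w'] /= [hi hw' ->]]; move: hi hw'; rewrite mem_iota IH /= => hi /andP[/eqP -> ->].
  by rewrite eqxx andbT; lia.
case: w => [|i w'] //= /andP[hs /andP[hi ha]].
exists (i, w'); split=> //; first by rewrite mem_iota add0n hi.
by rewrite IH ha andbT -eqSS.
Qed.

Lemma layer_pairwise n : pairwise lexlt (layer_words k n).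
Proof.
elim: n => [|n IH] //=.
have: forall a m, pairwise lexlt [seq i :: w | i <- iota a m, w <- layer_words k n].
  move=> a m; elim: m a => [|m IHm] a //=.
  rewrite pairwise_cat IHm andbT pairwise_map.
  apply/andP; split.
    apply/allrelP=> x y /mapP[w _ ->] /allpairsP[[i w'] /= [hi _ ->]].
    by move: hi; rewrite mem_iota /= => /andP[hi _]; rewrite hi.
  by apply: sub_pairwise IH => u v /=; rewrite ltnn eqxx.
by apply.
Qed.

End K.

Lemma pairwise_subseq (T : eqType) (r : rel T) (irr : irreflexive r) (tr : transitive r) (s t : seq T) :
  pairwise r s -> pairwise r t -> {subset t <= s} -> subseq t s.
Proof.
elim: s t => [|x s IH] [|y t] //=.
- by move=> _ _ /(_ y); rewrite inE eqxx => /(_ isT).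
- move=> /andP[hx hs] /andP[hy ht] hsub.
  case: eqP => [eyx|nyx].
    apply: IH => // z hz.
    have := hsub z; rewrite inE hz orbT => /(_ isT); rewrite inE => /orP[/eqP ezx|//].
    by move/allP: hy => /(_ z hz); rewrite ezx -eyx irr.
  have ys : y \in s by have := hsub y; rewrite !inE eqxx => /(_ isT) /orP[/eqP /nyx|].
  apply: IH => //=; first by rewrite hy.
  move=> z hz; have := hsub z hz; rewrite inE => /orP[/eqP ezx|//].
  have rxy : r x y by move/allP: hx; apply.
  move: hz; rewrite inE => /orP[/eqP ezy|hz]; first by case: nyx; rewrite -ezy -ezx.
  have ryz : r y z by move/allP: hy; apply.
  by have := tr _ _ _ rxy ryz; rewrite ezx irr.
Qed.

Lemma lds_ge p q : subseq q p -> sorted gtn q -> size q <= lds p.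
Proof.
case/subseqP=> m hm -> hs.
have hm' : size m == size p by rewrite hm.
rewrite /lds.
exact: (@leq_bigmax_cond _ (fun t : (size p).-tuple bool => sorted gtn (mask t p))
   (fun t : (size p).-tuple bool => size (mask t p)) (Tuple hm')).
Qed.



Section Chain.
Variable k : nat.
Hypothesis hk : 2 <= k.

Definition good n (w : seq nat) :=
  [&& size w == n, all (fun d => d < k) w & has (fun d => d != 0) w].

Definition R' (u v : seq nat) := [&& lexlt u v, rv k v < rv k u & size u == size v].

Lemma R'_trans : transitive R'.
Proof.
move=> v u w /and3P[l1 r1 /eqP s1] /and3P[l2 r2 /eqP s2].
by rewrite /R' (lexlt_trans l1 l2) s1 s2 eqxx (ltn_trans r2 r1).
Qed.

Definition blk (C : seq (seq nat)) a b := [seq a :: rcons u b | u <- C].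

Fixpoint G (C : seq (seq nat)) n a m :=
  match m with
  | 0 => [::]
  | m'.+1 => if m' == 0 then blk C a (k.-1 - a)
             else (blk C a (k.-1 - a) ++ [:: a.+1 :: rcons (nseq n 0) (k.-1 - a)]) ++ G C n a.+1 m'
  end.

Fixpoint chain n :=
  match n with
  | 0 => [:: [::]]
  | 1 => [:: [:: 1]]
  | 2 => [seq [:: a; k.-1 - a] | a <- iota 0 k]
  | S (S ((S _) as m)) => G (chain m) m 0 k
  end.

Lemma size_G C n a m : size (G C n a m) = m * size C + m.-1.
Proof.
elim: m a => [|m IH] a //=; case: eqP => [->|/eqP hm] /=.
  by rewrite size_map; lia.
rewrite !size_cat size_map IH /=; case: m hm IH => //= m _ _; lia.
Qed.

Lemma sorted_cat2 (T : Type) (r : rel T) x0 s1 s2 : sorted r s1 -> sorted r s2 ->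
  (0 < size s1 -> 0 < size s2 -> r (last x0 s1) (head x0 s2)) -> sorted r (s1 ++ s2).
Proof.
case: s1 => [|x s1] //= h1 h2 h; rewrite cat_path h1 /=.
case: s2 h2 h => [|y s2] //= -> h; rewrite andbT.
have := h isT isT; congr (r _ _); elim: s1 {h1 h} x => //.
Qed.

Lemma R'_ext a b u v : R' u v -> R' (a :: rcons u b) (a :: rcons v b).
Proof.
case/and3P=> hl hr /eqP hs; rewrite /R' /= ltnn eqxx /=.
rewrite -!cats1 lexlt_cat // !cats1 !(rv_rcons hk) !size_rcons hs eqxx andbT.
rewrite ltn_add2l ltn_pmul2l; last lia.
by rewrite ltn_add2r.
Qed.

Lemma G_S C n a m : G C n a m.+1 = if m == 0 then blk C a (k.-1 - a)
  else (blk C a (k.-1 - a) ++ [:: a.+1 :: rcons (nseq n 0) (k.-1 - a)]) ++ G C n a.+1 m.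
Proof. by []. Qed.

Lemma G_ok C n : C != [::] -> all (good n) C -> sorted R' C ->
  forall m a, 0 < m -> a + m = k ->
  [/\ all (good n.+2) (G C n a m), sorted R' (G C n a m) &
      head [::] (G C n a m) = a :: rcons (head [::] C) (k.-1 - a)].
Proof.
case: C => [|c C'] // _ hg hs; set C := c :: C'.
have sb : forall a b, sorted R' (blk C a b).
  by move=> a b; rewrite /blk sorted_map; apply: sub_sorted hs => u v; exact: R'_ext.
have gb : forall a b, a < k -> b < k -> all (good n.+2) (blk C a b).
  move=> a b ha hb; apply/allP=> w /mapP[u hu ->].
  move/allP: hg => /(_ u hu) /and3P[/eqP su au hu'].
  rewrite /good /= size_rcons su eqxx ha /= -cats1 all_cat au /= hb has_cat hu'.
  by rewrite orbT.
elim=> [|m IH] a // _ ham; rewrite G_S.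
case: eqP => [m0|/eqP m0].
  by split; [apply: gb; lia | apply: sb | rewrite /blk /C].
have [g1 s1 h1] := IH a.+1 ltac:(lia) ltac:(lia).
have lastblk : last [::] (blk C a (k.-1 - a)) = a :: rcons (last c C') (k.-1 - a).
  by rewrite /blk /C /= (last_map (fun u => a :: rcons u _)).
have memC : forall u, u \in C -> good n u by apply/allP.
have gl := memC _ (mem_last c C'); have gh := memC _ (mem_head c C').
case/and3P: gl => /eqP sl al hl; case/and3P: gh => /eqP sh ah hh.
split.
- rewrite !all_cat g1 gb ?andbT /=; try lia.
  rewrite /good /= size_rcons size_nseq eqxx -cats1 all_cat all_nseq /=.
  rewrite !andbT; apply/and3P; split=> //; try lia; apply/orP; right; lia.
- apply: (sorted_cat2 (x0 := [::])); [apply: (sorted_cat2 (x0 := [::]))|exact: s1|].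
  + exact: sb.
  + by [].
  + move=> _ _; rewrite lastblk /= /R' /= ltnSn /= !size_rcons size_nseq sl eqxx andbT.
    rewrite !(rv_rcons hk) rv_nseq size_nseq sl /=.
    have := rv_pos hk hl; set r := rv k (last c C'); set K := k ^ n; nia.
  + move=> _ _; rewrite last_cat /= h1 /R' /= ltnn eqxx /=.
    rewrite -!cats1 lexlt_cat ?size_nseq //=; last by rewrite -sh lexlt_nseq.
    rewrite !size_cat size_nseq sh eqxx andbT !cats1 !(rv_rcons hk) rv_nseq size_nseq sh.
    have := rv_lt hk ah; rewrite sh; set r := rv k c; set K := k ^ n.
    have -> : k.-1 - a = (k.-1 - a.+1).+1 by lia.
    nia.
- by rewrite /= /C.
Qed.

Lemma sorted_map_iota (T : Type) (r : rel T) (f : nat -> T) s m :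
  (forall i, s <= i -> i.+1 < s + m -> r (f i) (f i.+1)) -> sorted r (map f (iota s m)).
Proof.
elim: m s => [|m IH] s //= h.
case: m IH h => [|m] IH h //=.
rewrite (h s) //; last lia.
have := IH s.+1 => /=; apply=> i h1 h2; apply: h; lia.
Qed.

Definition okc n := [/\ all (good n) (chain n), sorted R' (chain n) & chain n != [::]].

Lemma chain_ok p : okc p.+1 /\ okc p.+2.
Proof.
elim: p => [|p [IH1 IH2]].
  split.
    by rewrite /okc /= /good /= andbT hk.
  split.
  - apply/allP=> w /mapP[a]; rewrite mem_iota => /andP[_ ha] ->.
    rewrite /good /= !andbT orbF; apply/andP; split; first (apply/andP; split; lia).
    apply/orP; case: a ha => [|a] ha; [right; lia|by left].
  - apply: sorted_map_iota => i _ hi; rewrite /R' /= ltnSn /=.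
    apply/andP; split=> //; rewrite !muln0 !addn0; nia.
  - by rewrite /=; case: (k) hk.
split; first exact: IH2.
case: IH1 => hg hs hn.
have h0 : 0 < k by lia.
have hk0 : 0 + k = k by [].
case: (@G_ok (chain p.+1) p.+1 hn hg hs k 0 h0 hk0) => g s h.
split=> //.
have : 0 < size (chain p.+3).
  have : 0 < size (chain p.+1) by rewrite lt0n size_eq0.
  rewrite /= size_G; nia.
by case: (chain p.+3).
Qed.

Lemma size_chain p : (size (chain p.*2.+1)).+1 = 2 * k ^ p /\
                     (size (chain p.*2.+2)).+1 = (k + 1) * k ^ p.
Proof.
elim: p => [|p [IH1 IH2]].
  by rewrite /= size_map size_iota !muln1 addn1.
rewrite doubleS /= !size_G expnS.
split.
  move: IH1; set s := size _; set K := k ^ p; nia.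
move: IH2; set s := size _; set K := k ^ p; nia.
Qed.
End Chain.



Section Reach.
Variable k : nat.
Hypothesis hk : 2 <= k.

Definition star := clos_refl_trans config (fire_step k).
Definition child_of (v w : vertex) := [&& size w == (size v).+1, take (size v) w == v & last 0 w < k].
Definition inside (v w : vertex) := take (size v) w == v.

Lemma child_rcons (v w : vertex) : size w = (size v).+1 -> take (size v) w = v -> w = rcons v (last 0 w).
Proof.
move=> hs ht.
have hd : size (drop (size v) w) = 1 by rewrite size_drop hs subSnn.
rewrite -[w](cat_take_drop (size v)) ht.
by case: (drop _ w) hd => [|x [|]] //= _; rewrite cats1 last_rcons.
Qed.

Lemma fire1 (C : config) v S R : size S = k -> perm_eq (C v) (S ++ R) -> sorted leq S ->
  fire_step k C (fun w => if w == v then R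
                          else if child_of v w then nth 0 S (last 0 w) :: C w else C w).
Proof.
move=> hS hp hso; exists v, S, R; split => //.
- by rewrite eqxx.
- move=> i hi.
  have nv : (rcons v i == v) = false.
    by apply/negbTE/eqP => /(congr1 size); rewrite size_rcons; lia.
  rewrite nv /child_of size_rcons eqxx -cats1 take_size_cat // last_cat /= hi eqxx.
  by rewrite (sorted_sort leq_trans hso).
- move=> w hw hc; rewrite (negbTE hw); case: ifP => // /and3P[/eqP hs /eqP ht hl].
  by case/negP: (hc _ hl); apply/eqP; exact: child_rcons.
Qed.

Lemma fire_many (C : config) v a b M :
  perm_eq (C v) [seq a + b * m | m <- iota 0 (M * k)] ->
  (forall i, i < k -> C (rcons v i) = [::]) ->
  forall j, j <= M -> exists D, [/\ star C D,
    perm_eq (D v) [seq a + b * m | m <- iota (j * k) ((M - j) * k)],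
    (forall i, i < k -> perm_eq (D (rcons v i)) [seq a + b * (i + k * m) | m <- iota 0 j]) &
    (forall w, w != v -> ~~ child_of v w -> D w = C w)].
Proof.
move=> hp hC; elim=> [|j IH] hj.
  exists C; split => //; first exact: rt_refl.
  - by rewrite mul0n subn0.
  - by move=> i hi; rewrite hC.
case: (IH (ltnW hj)) => D [hst hv hch hot].
set S := [seq a + b * m | m <- iota (j * k) k].
set R := [seq a + b * m | m <- iota (j * k + k) ((M - j.+1) * k)].
have e : (M - j) * k = k + (M - j.+1) * k.
  by rewrite (_ : M - j = (M - j.+1).+1) ?mulSn //; lia.
have hp' : perm_eq (D v) (S ++ R) by rewrite /S /R -map_cat -iotaD -e.
have hsS : sorted leq S.
  rewrite sorted_map; apply: sub_sorted (iota_sorted _ _) => x y /= hxy.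
  by rewrite leq_add2l leq_mul2l hxy orbT.
have hsz : size S = k by rewrite size_map size_iota.
exists (fun w => if w == v then R
                 else if child_of v w then nth 0 S (last 0 w) :: D w else D w); split.
- exact: rt_trans hst (rt_step _ _ _ _ (fire1 hsz hp' hsS)).
- by rewrite eqxx /R mulSn addnC.
- move=> i hi.
  have -> : iota 0 j.+1 = iota 0 j ++ [:: j] by rewrite -addn1 iotaD.
  rewrite map_cat.
  have nv : (rcons v i == v) = false.
    by apply/negbTE/eqP => /(congr1 size); rewrite size_rcons; lia.
  rewrite nv /child_of size_rcons eqxx -cats1 take_size_cat // last_cat /= hi eqxx.
  rewrite cats1 /S (nth_map 0) ?size_iota // nth_iota //.

  rewrite /= perm_sym perm_catC /=.
  have -> : a + b * (j * k + i) = a + b * (i + k * j) by congr (_ + _ * _); rewrite addnC mulnC.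
  by rewrite perm_cons perm_sym hch.
- move=> w hw hc; rewrite (negbTE hw) (negbTE hc); exact: hot.
Qed.

Definition F n a b (u : seq nat) :=
  if (size u == n) && all (fun d => d < k) u then [:: a + b * rv k u] else [::].

Lemma inside_rcons v c w : ~~ inside v w -> ~~ inside (rcons v c) w.
Proof.
apply: contra; rewrite /inside size_rcons => /eqP h.
have := congr1 (take (size v)) h; rewrite take_takel // -cats1 take_size_cat // => ->.
by [].
Qed.

Lemma not_inside_v v c : ~~ inside (rcons v c) v.
Proof.
rewrite /inside size_rcons take_oversize //; apply/eqP => /(congr1 size).
rewrite size_rcons; lia.
Qed.

Lemma not_inside_i v c i u : i != c -> ~~ inside (rcons v c) (v ++ i :: u).
Proof.
move=> hic; rewrite /inside size_rcons take_cat ltnNge leqnSn /= subSnn /=.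
by rewrite -cats1; apply: contra hic => /eqP /(congr1 (drop (size v))); rewrite !drop_size_cat // => -[->].
Qed.

Lemma spread n : forall (C : config) v a b,
  perm_eq (C v) [seq a + b * m | m <- iota 0 (k ^ n)] ->
  (forall u, u != [::] -> C (v ++ u) = [::]) ->
  exists D, [/\ star C D, (forall w, ~~ inside v w -> D w = C w) &
                          (forall u, D (v ++ u) = F n a b u)].
Proof.
elim: n => [|n IH] C v a b hp hC.
  have hv : C v = [:: a + b * 0] by apply: perm_small_eq hp.
  exists C; split => //; first exact: rt_refl.
  case=> [|x u]; first by rewrite cats0 hv /F.
  by rewrite hC.
rewrite expnSr in hp.
have hch0 : forall i, i < k -> C (rcons v i) = [::] by move=> i _; rewrite -cats1 hC.
case: (fire_many hp hch0 (leqnn (k ^ n))) => D1 [s1 hv1 hc1 ho1].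
have D1v : D1 v = [::] by apply/perm_nilP; rewrite subnn mul0n /= in hv1.
have deep : forall i u, u != [::] -> D1 (v ++ i :: u) = [::].
  move=> i u hu; rewrite ho1 ?hC //.
  - by apply/eqP => /(congr1 size); rewrite size_cat /=; lia.
  - rewrite /child_of size_cat /=; case: u hu => // x u _ /=; apply/negP => /and3P[/eqP h _ _]; lia.
have: forall c, c <= k -> exists D, [/\ star D1 D, (forall w, ~~ inside v w -> D w = D1 w), D v = [::],
   (forall i u, i < c -> D (v ++ i :: u) = F n (a + b * i) (b * k) u) &
   (forall i u, c <= i -> D (v ++ i :: u) = D1 (v ++ i :: u))].
  elim=> [|c IHc] hc.
    by exists D1; split => //; exact: rt_refl.
  case: (IHc (ltnW hc)) => D [s2 ho2 hv2 hin2 hout2].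
  have hpc : perm_eq (D (rcons v c)) [seq (a + b * c) + (b * k) * m | m <- iota 0 (k ^ n)].
    have e : [seq a + b * (c + k * m) | m <- iota 0 (k ^ n)] =
             [seq (a + b * c) + (b * k) * m | m <- iota 0 (k ^ n)].
      by apply: eq_map => m; rewrite mulnDr mulnA addnA.
    by rewrite -e -cats1 hout2 // cats1; apply: hc1.
  have hdesc : forall u, u != [::] -> D (rcons v c ++ u) = [::].
    by move=> u hu; rewrite cat_rcons hout2 // deep.
  case: (IH D (rcons v c) (a + b * c) (b * k) hpc hdesc) => D' [s3 ho3 hin3].
  exists D'; split.
  - exact: rt_trans s2 s3.
  - by move=> w hw; rewrite ho3 ?ho2 //; apply: inside_rcons.
  - by rewrite ho3 ?hv2 //; apply: not_inside_v.
  - move=> i u hi; case: (ltngtP i c) => [hic|hci|->].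
    + by rewrite ho3 ?hin2 //; apply: not_inside_i; rewrite neq_ltn hic.
    + lia.
    + by rewrite -cat_rcons hin3.
  - move=> i u hi; rewrite ho3 ?hout2 //; first exact: ltnW.
    by apply: not_inside_i; rewrite neq_ltn hi orbT.
case/(_ k (leqnn k)) => D [s2 ho2 hv2 hin2 hout2].
exists D; split.
- exact: rt_trans s1 s2.
- move=> w hw; rewrite ho2 // ho1 //.
  + by apply: contraNneq hw => ->; rewrite /inside take_size.
  + by apply: contra hw => /and3P[_ h _].
- case=> [|i u]; first by rewrite cats0 hv2 /F.
  case: (ltnP i k) => hi.
    rewrite hin2 // /F /= eqSS hi /=.
    by case: ifP => //; rewrite mulnDr mulnA addnA.
  rewrite hout2 // ho1.
  + rewrite hC // /F /= (leq_gtF hi) andbF //.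
  + by apply/eqP => /(congr1 size); rewrite size_cat /=; lia.
  + rewrite /child_of size_cat /=; case: u => [|x u] /=.
      by rewrite cats1 last_rcons (leq_gtF hi) !andbF.
    by apply/negP => /and3P[/eqP h _ _]; lia.
Qed.
End Reach.



Lemma size_chain_target k (hk : 2 <= k) l : 1 <= l ->
  (if ~~ odd l then (k + 1) * k ^ (l./2 - 1) - 1 else 2 * k ^ ((l - 1)./2) - 1) = size (chain k l).
Proof.
move=> hl; have := odd_double_half l.
move: (odd l) (l./2) => b q e; rewrite -e in hl *.
case: b e hl => e hl; cbn [negb].
  have -> : 1 + q.*2 - 1 = q.*2 by lia.
  rewrite doubleK add1n.
  have [h1 _] := size_chain hk q; lia.
case: q e hl => [|q] e hl; first by [].
rewrite add0n doubleS.
have -> : q.+1 - 1 = q by lia.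
have [_ h2] := size_chain hk q; lia.
Qed.

Theorem proposition8p1 (k l : nat) (hk : 2 <= k) (hl : 1 <= l) :
  exists C : config,
    [/\ reachable k l C, stable k C &
        lds (config_perm k l C) >=
          (if ~~ odd l then (k + 1) * k ^ (l./2 - 1) - 1
           else 2 * k ^ ((l - 1)./2) - 1)].
Proof.
have hp : perm_eq (init_config k l [::]) [seq 1 + 1 * m | m <- iota 0 (k ^ l)].
  rewrite /init_config eqxx.
  have := iotaDl 1 0 (k ^ l); rewrite addn0 => ->.
  have -> : [seq 1 + 1 * m | m <- iota 0 (k ^ l)] = map (addn 1) (iota 0 (k ^ l)).
    by apply: eq_map => m; rewrite mul1n.
  exact: perm_refl.
have hC : forall u, u != [::] -> init_config k l ([::] ++ u) = [::].
  by move=> u hu; rewrite /init_config /= (negbTE hu).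
case: (spread hk hp hC) => D [s _ hf].
have hf' : forall w, D w = F k l 1 1 w by move=> w; exact: (hf w).
exists D; split.
- exact: s.
- by move=> v; rewrite hf' /F; case: ifP => //= _; lia.
have hperm : config_perm k l D = map (fun w => 1 + rv k w) (layer_words k l).
  rewrite /config_perm; apply/eq_in_map => w hw.
  by rewrite hf' /F; move: hw; rewrite (mem_layer hk) => ->; rewrite mul1n.
have [p ep] : exists p, l = p.+1 by case: (l) hl => [|p] //; exists p.
have [hg hs hn] : okc k l by rewrite ep; exact: (chain_ok hk p).1.
have hsub : subseq (chain k l) (layer_words k l).
  apply: (pairwise_subseq lexlt_irr lexlt_trans (layer_pairwise _ _)).
    rewrite -(sorted_pairwise lexlt_trans); apply: sub_sorted hs => u v.
    by case/and3P.
  move=> w hw; rewrite (mem_layer hk); move/allP: hg => /(_ w hw) /and3P[-> -> _].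
  by [].
have hsort : sorted gtn [seq 1 + rv k w | w <- chain k l].
  rewrite sorted_map; apply: sub_sorted hs => u v /and3P[_ h _] /=.
  by rewrite ltn_add2l.
have := lds_ge (map_subseq (fun w => 1 + rv k w) hsub) hsort.
by rewrite hperm size_map (size_chain_target hk hl).
Qed.
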